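(* Let $m_1\le m_2\le\dots\le m_k$ be nonnegative integers, $n=\sum_r m_r$, and $T_1,\dots,T_n\in\{H,L\}$ with $0\le H<L$. Let $q^{(t)}_r$ be the capacity variables computed by Algorithm 1 on this input, with $q^{(t)}_0:=0$. For a look-ahead setup $(r,h)$ with $1\le r\le h\le k$ and a task index $t$, define $Z^{(r,h,t)}_L=\sum_{i=1}^{h-1}\min\{q^{(t)}_i,q^{(t)}_{r-1}\}$ and $Z^{(r,h,t)}_H=\sum_{i=r}^{h}(q^{(t)}_i-q^{(t)}_{r-1})$ (the L-zone and H-zone sizes when the algorithm allocates task $t$ under setup $(r,h)$). Then for all $1\le i<j\le n$, $$Z^{(r,h,i)}_H+Z^{(r,h,i)}_L+i-1\;\le\;Z^{(r,h,j)}_H+Z^{(r,h,j)}_L+j-1.$$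
   Context: Algorithm 1 (simulation-based threshold algorithm). Input: integers $0\le m_1\le\dots\le m_k$ and a sequence $T_1,\dots,T_n$ with $n=\sum_r m_r$. Set $q^{(1)}_r=m_r$ for all $r$. For $t=1,\dots,n$: set $x_t=\mathrm{TA}(q^{(t)}_1,\dots,q^{(t)}_k;\,T_t,T_{t+1},\dots,T_n)$ and $q^{(t+1)}_r=q^{(t)}_r-\mathbf{1}(x_t=r)$ for each $r$. Output $\mathbf{x}=(x_1,\dots,x_n)$. Subroutine $\mathrm{TA}(m_1,\dots,m_k;\,S_1,\dots,S_N)$ (ThresholdAllocation), with the convention $m_0:=0$: for $\gamma=k,k-1,\dots,1$: if $m_\gamma=m_{\gamma-1}$, go to the next $\gamma$; otherwise, for $h=\gamma,\gamma+1,\dots,k$: let $Z_L=\sum_{i=1}^{h-1}\min\{m_i,m_{\gamma-1}\}$ and $Z_H=\sum_{i=\gamma}^{h}(m_i-m_{\gamma-1})$; if $|\{i\in\{1,\dots,Z_L+Z_H\}: S_i>S_1\}|\ge Z_L$, return $\gamma$ (agent to which $S_1$ is assigned). *)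

(* Defs.v *)
From HB Require Import structures.
From mathcomp Require Import all_boot all_order all_algebra.
Set Implicit Arguments. Unset Strict Implicit. Unset Printing Implicit Defensive.
Import Order.TTheory GRing.Theory Num.Theory.

(* Capacity vectors are sequences q = [:: q_1; ...; q_k] of naturals.
   qget q r = q_r for 1 <= r <= k, with the convention q_0 := 0. *)
Definition qget (q : seq nat) (r : nat) : nat :=
  if r is j.+1 then nth 0%N q j else 0%N.

Definition ZL (q : seq nat) (g h : nat) : nat :=
  (\sum_(1 <= i < h) minn (qget q i) (qget q g.-1))%N.

Definition ZH (q : seq nat) (g h : nat) : nat :=
  (\sum_(g <= i < h.+1) (qget q i - qget q g.-1))%N.

Definition nbigger (R : realDomainType) (S : seq R) (N : nat) : nat :=
  count (fun x => nth 0%R S 0 < x)%R (take N S).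

Definition TA_test (R : realDomainType) (q : seq nat) (S : seq R) (g h : nat) : bool :=
  (ZL q g h <= nbigger S (ZL q g h + ZH q g h))%N.

(* ThresholdAllocation(q_1..q_k; S_1..S_N): gamma runs k, k-1, ..., 1; gamma is
   skipped if q_gamma = q_(gamma-1); otherwise gamma is returned as soon as the
   test succeeds for some h in gamma..k.  Returns 0 if no gamma is returned. *)
Definition TA (R : realDomainType) (q : seq nat) (S : seq R) : nat :=
  let k := size q in
  let gs := rev (iota 1 k) in
  let P := fun g => (qget q g != qget q g.-1) &&
                    has (fun h => TA_test q S g h) (iota g (k.+1 - g)) in
  nth 0%N gs (find P gs).

Definition decr (q : seq nat) (x : nat) : seq nat :=
  mkseq (fun i => nth 0%N q i - (x == i.+1)) (size q).

Fixpoint caps_from (R : realDomainType) (q : seq nat) (T : seq R) (s : nat)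
  : seq nat :=
  match s with
  | 0 => q
  | s'.+1 => caps_from (decr q (TA q T)) (behead T) s'
  end.

(* q^{(t)} computed by Algorithm 1 on input m, T (t >= 1). *)
Definition caps (R : realDomainType) (m : seq nat) (T : seq R) (t : nat) : seq nat :=
  caps_from m T t.-1.

(* Main.v *)
Require Import Defs.
From HB Require Import structures.
From mathcomp Require Import all_boot all_order all_algebra.
From mathcomp Require Import zify.
Import Order.TTheory GRing.Theory Num.Theory.

Lemma size_decr q x : size (decr q x) = size q.
Proof. by rewrite size_mkseq. Qed.

Lemma qget_decr q x i : qget (decr q x) i = qget q i - (i == x).
Proof.
case: i => [|j] /=; first by rewrite sub0n.
case: (ltnP j (size q)) => Hj.
  by rewrite nth_mkseq // eq_sym.
by rewrite !nth_default ?size_mkseq.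
Qed.

Definition mono (q : seq nat) :=
  forall i j, i <= j -> j <= size q -> qget q i <= qget q j.

Lemma mono_sorted m : sorted leq m -> mono m.
Proof.
move=> Hs i j Hij Hj; case: i Hij => [|i] Hij //=.
case: j Hij Hj => [|j] //= Hij Hj.
apply: (sorted_leq_nth leq_trans leqnn) => //; rewrite inE; lia.
Qed.

Definition validx (q : seq nat) x :=
  (x == 0) || ((0 < x <= size q) && (qget q x != qget q x.-1)).

Lemma TA_ok (R : realDomainType) q (S : seq R) : validx q (TA q S).
Proof.
rewrite /validx /TA.
set gs := rev _; set P := fun g => _.
case: (boolP (has P gs)) => Hh.
  have := nth_find 0 Hh; rewrite {1}/P => /andP[Hne _]; move: Hne.
  have : nth 0 gs (find P gs) \in gs by rewrite mem_nth // -has_find.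
  rewrite mem_rev mem_iota => /andP[H1 H2] Hne; apply/orP; right; rewrite Hne andbT; apply/andP; split; lia.
by rewrite nth_default // leqNgt -has_find Hh.
Qed.

Lemma mono_decr q x : mono q -> validx q x -> mono (decr q x).
Proof.
move=> Hm /orP[/eqP->|/andP[/andP[x0 xs] Hne]] i j Hij;
  rewrite size_decr => Hj; rewrite !qget_decr.
  have := Hm i j Hij Hj; lia.
have h1 := Hm i j Hij Hj.
case: (eqVneq j x) => Ej.
  subst j; case: (eqVneq i x) => Ei; first by subst i; lia.
  have h2 := Hm i x.-1 ltac:(lia) ltac:(lia).
  have h3 := Hm x.-1 x ltac:(lia) ltac:(lia).
  move: Hne; rewrite neq_ltn; case/orP => ?; lia.
lia.
Qed.
Definition fterm q r h i :=
  (if i < h then minn (qget q i) (qget q r.-1) else 0) +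
  (if r <= i then qget q i - qget q r.-1 else 0).

Lemma Phi_sum q r h : 1 <= r -> r <= h ->
  ZH q r h + ZL q r h = \sum_(0 <= i < h.+1) fterm q r h i.
Proof.
move=> r1 rh; rewrite big_ltn // {1}/fterm /= min0n.
idtac.
have -> : (r <= 0) = false by lia.
rewrite if_same add0n big_split /= add0n [ZH q r h + _]addnC.
congr (_ + _).
  rewrite big_nat_recr /=; last lia.
  rewrite ltnn addn0; apply: eq_big_nat => i /andP[_ ->] //.
rewrite (big_cat_nat _ (n := r)) //=; last lia.
rewrite big1_seq ?add0n; last first.
  move=> i /andP[_]; rewrite mem_index_iota => /andP[_ ir].
  by rewrite leqNgt ir.
by apply: eq_big_nat => i /andP[-> _].
Qed.

Lemma sum_ind x n : \sum_(0 <= i < n) (i == x) = (x < n).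
Proof.
elim: n => [|n IH]; first by rewrite big_geq.
rewrite big_nat_recr //= IH ltnS.
case: (ltngtP x n) => H; lia.
Qed.

Lemma step q x r h : 1 <= r -> r <= h -> mono q -> validx q x ->
  ZH q r h + ZL q r h <= ZH (decr q x) r h + ZL (decr q x) r h + 1.
Proof.
move=> r1 rh Hm Hv; rewrite !Phi_sum //.
have G : x != 0 -> forall i, i < x -> qget q i < qget q x.
  move: Hv => /orP[/eqP->//|/andP[/andP[x0 xs] Hne]] _ i ix.
  have h2 := Hm i x.-1 ltac:(lia) ltac:(lia).
  have h3 := Hm x.-1 x ltac:(lia) ltac:(lia).
  move: Hne; rewrite neq_ltn; case/orP => ?; lia.
apply: (leq_trans (n := \sum_(0 <= i < h.+1) (fterm (decr q x) r h i + (i == x)))).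
  apply: leq_sum => i _.
  rewrite /fterm !qget_decr.
  have q0 : qget q 0 = 0 by [].
  case: (eqVneq (r.-1) x) => E1.
    case: (eqVneq x 0) => x0.
      rewrite x0 in E1 *; rewrite E1 q0 /=.
      case: (i < h); case: (r <= i); case: (i == r.-1); simpl; lia.
    have Gi := G x0 i.
    rewrite -E1 in Gi *.
    case: (eqVneq i r.-1) => Ei.
      subst i.
      have -> : (r.-1 < h) = true by lia.
      have -> : (r <= r.-1) = false by lia.
      rewrite /=; lia.
    case: (ltnP i r.-1) => ir.
      have := Gi ir. have -> : (r <= i) = false by lia.
      rewrite /=. case: (i < h); lia.
    have -> : (r <= i) = true by lia.
    rewrite /=. case: (i < h); lia.
  case: (i < h); case: (r <= i); case: (i == x); simpl; lia.
rewrite big_split /= sum_ind; lia.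
Qed.

Lemma caps_add (R : realDomainType) (q : seq nat) (T : seq R) a b :
  caps_from q T (a + b) = caps_from (caps_from q T a) (drop a T) b.
Proof.
elim: a q T => [|a IH] q T /=; first by rewrite drop0.
by rewrite IH -drop1 drop_drop addn1.
Qed.

Lemma caps_inv (R : realDomainType) (q : seq nat) (T : seq R) s r h :
  1 <= r -> r <= h -> mono q ->
  mono (caps_from q T s) /\
  ZH q r h + ZL q r h <= ZH (caps_from q T s) r h + ZL (caps_from q T s) r h + s.
Proof.
move=> r1 rh; elim: s q T => [|s IH] q T Hm /=; first by rewrite addn0.
have Hv := @TA_ok R q T.
have [Hm' Hs] := IH (decr q (TA q T)) (behead T) (mono_decr _ _ Hm Hv).
split => //.
have := step _ _ _ _ r1 rh Hm Hv; lia.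
Qed.

Theorem lemma4 (R : realDomainType) (H L : R) (m : seq nat) (T : seq R) :
  (0 <= H)%R -> (H < L)%R ->
  sorted leq m ->
  size T = sumn m ->
  all (fun x => (x == H) || (x == L)) T ->
  forall r h : nat, (1 <= r)%N -> (r <= h)%N -> (h <= size m)%N ->
  forall i j : nat, (1 <= i)%N -> (i < j)%N -> (j <= size T)%N ->
  (ZH (caps m T i) r h + ZL (caps m T i) r h + i - 1 <=
   ZH (caps m T j) r h + ZL (caps m T j) r h + j - 1)%N.
Proof.
move=> _ _ Hs _ _ r h r1 rh _ i j i1 ij _.
have Hm := mono_sorted _ Hs.
rewrite /caps.
have -> : j.-1 = i.-1 + (j - i) by lia.
rewrite caps_add.
have [Hm1 _] := caps_inv _ _ T (i.-1) _ _ r1 rh Hm.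
have [_ Hle] := caps_inv _ _ (drop i.-1 T) (j - i) _ _ r1 rh Hm1.
lia.
Qed.
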